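(* With the notation of the context, for every instance with two candidates $P,Q$ at least one of the following two inequalities holds: $$\sum_{l=k}^m\frac{\tau_{l+1}-\delta}{\tau_{l+1}-1}|B_l|\le\sum_{l=1}^m\frac{\delta\tau_l-1}{\tau_l+1}|A_l|+\sum_{l=1}^{k-1}\frac{\delta-\tau_{l+1}}{\tau_{l+1}+1}|B_l|,$$ $$\sum_{l=k}^m\frac{\tau_{l+1}-\delta}{\tau_{l+1}-1}|A_l|\le\sum_{l=1}^m\frac{\delta\tau_l-1}{\tau_l+1}|B_l|+\sum_{l=1}^{k-1}\frac{\delta-\tau_{l+1}}{\tau_{l+1}+1}|A_l|.$$ Hence a resolute rule selecting $P$ only when the first holds and $Q$ only when the second holds always exists.
   Context: Thresholds $1\le\tau_1<\dots<\tau_m$, $\tau_0=1/\tau_1$, $\tau_{m+1}=\infty$; $\delta=\max_{0\le l\le m}\frac{\tau_l\tau_{l+1}+2\tau_{l+1}-1}{\tau_l\tau_{l+1}+1}$ (the $l=m$ term meaning $(\tau_m+2)/\tau_m$); $k\in\{1,\dots,m\}$ satisfies $\tau_k\le\delta<\tau_{k+1}$; $\frac{\tau_{m+1}-\delta}{\tau_{m+1}-1}$ is interpreted as $1$. Voters and candidates lie in a metric space $(X,d)$; voter $i$'s preference strength for $P$ over $Q$ is $\alpha_i^{PQ}=d(i,Q)/d(i,P)$ when $d(i,P)\le d(i,Q)$. $A_l=\{i: d(i,P)\le d(i,Q),\ \tau_l\le\alpha_i^{PQ}<\tau_{l+1}\}$ and $B_l=\{j: d(j,Q)\le d(j,P),\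 \tau_l\le\alpha_j^{QP}<\tau_{l+1}\}$ for $l=1,\dots,m$. *)

(* Defs.v *)
From HB Require Import structures.
From mathcomp Require Import all_boot all_order all_algebra.
Set Implicit Arguments. Unset Strict Implicit. Unset Printing Implicit Defensive.
Import Order.TTheory GRing.Theory Num.Theory.
Local Open Scope ring_scope.

Definition is_metric (R : realFieldType) (X : Type) (d : X -> X -> R) : Prop :=
  [/\ forall x y, 0 <= d x y,
      forall x y, d x y = 0 <-> x = y,
      forall x y, d x y = d y x
    & forall x y z, d x z <= d x y + d y z].

(* thresholds tau_1 < ... < tau_m are tau 1, ..., tau m;
   tau_0 := 1/tau_1 ; tau_{m+1} := +infinity (handled explicitly) *)
Definition tauE (R : realFieldType) (tau : nat -> R) (l : nat) : R :=
  if l == 0%N then (tau 1%N)^-1 else tau l.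

Definition dterm (R : realFieldType) (tau : nat -> R) (m l : nat) : R :=
  if l == m then (tau m + 2) / tau m
  else (tauE tau l * tau l.+1 + 2 * tau l.+1 - 1) / (tauE tau l * tau l.+1 + 1).

Definition delta (R : realFieldType) (tau : nat -> R) (m : nat) : R :=
  \big[Num.max/dterm tau m 0]_(l < m.+1) dterm tau m l.

(* [inband tau m l dP dQ] : the strength alpha = dQ/dP satisfies
   tau_l <= alpha < tau_{l+1} (with tau_{m+1} = infinity).
   Conventions: alpha = +infinity if dP = 0 < dQ; alpha = 1 if dP = dQ = 0. *)
Definition inband (R : realFieldType) (tau : nat -> R) (m l : nat) (dP dQ : R) : bool :=
  if dP == 0 then
    (if dQ == 0 then (tau l <= 1) && ((l == m) || (1 < tau l.+1)) else l == m)
  else (tau l <= dQ / dP) && ((l == m) || (dQ / dP < tau l.+1)).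

(* A_l : voters preferring P to Q with strength in [tau_l, tau_{l+1}) ;
   B_l is obtained by swapping P and Q. *)
Definition bandset (R : realFieldType) (X : Type) (d : X -> X -> R)
  (V : finType) (loc : V -> X) (tau : nat -> R) (m : nat) (P Q : X) (l : nat)
  : {set V} :=
  [set i | (d (loc i) P <= d (loc i) Q) && inband tau m l (d (loc i) P) (d (loc i) Q)].

(* (tau_{l+1} - delta)/(tau_{l+1} - 1), interpreted as 1 when l = m *)
Definition coefHigh (R : realFieldType) (tau : nat -> R) (m : nat) (dl : R) (l : nat) : R :=
  if l == m then 1 else (tau l.+1 - dl) / (tau l.+1 - 1).

Definition coefA (R : realFieldType) (tau : nat -> R) (dl : R) (l : nat) : R :=
  (dl * tau l - 1) / (tau l + 1).

Definition coefLow (R : realFieldType) (tau : nat -> R) (dl : R) (l : nat) : R :=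
  (dl - tau l.+1) / (tau l.+1 + 1).

(* Main.v *)
Require Import Defs.
From HB Require Import structures.
From mathcomp Require Import all_boot all_order all_algebra.
From mathcomp Require Import lra.
Import Order.TTheory GRing.Theory Num.Theory.
Local Open Scope ring_scope.

Lemma dterm_le (R : realFieldType) (tau : nat -> R) m l :
  (l <= m)%N -> dterm tau m l <= delta tau m.
Proof.
move=> hl; rewrite /delta.
have := @le_bigmax _ R _ (dterm tau m 0) (fun i : 'I_m.+1 => dterm tau m i) (Ordinal (hl : (l < m.+1)%N)).
by [].
Qed.

Lemma final {R : realFieldType} (ha hb ca cb la lb : R) :
  ha + hb <= (ca + cb) + (la + lb) -> hb <= ca + lb \/ ha <= cb + la.
Proof.
move=> h; case: (lerP hb (ca + lb)) => h1; first by left.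
right; lra.
Qed.

Theorem mainTheorem10 (R : realFieldType) (X : Type) (d : X -> X -> R)
  (hd : is_metric d) (V : finType) (loc : V -> X) (P Q : X)
  (m : nat) (tau : nat -> R) (k : nat)
  (hm : (1 <= m)%N) (htau1 : 1 <= tau 1%N)
  (htau : forall l, (1 <= l)%N -> (l < m)%N -> tau l < tau l.+1)
  (hk1 : (1 <= k)%N) (hkm : (k <= m)%N)
  (hk : tau k <= delta tau m /\ (k == m \/ delta tau m < tau k.+1)) :
  let dl := delta tau m in
  let A := bandset d loc tau m P Q in
  let B := bandset d loc tau m Q P in
  (\sum_(k <= l < m.+1) coefHigh tau m dl l * #|B l|%:R
     <= \sum_(1 <= l < m.+1) coefA tau dl l * #|A l|%:R
        + \sum_(1 <= l < k) coefLow tau dl l * #|B l|%:R)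
  \/
  (\sum_(k <= l < m.+1) coefHigh tau m dl l * #|A l|%:R
     <= \sum_(1 <= l < m.+1) coefA tau dl l * #|B l|%:R
        + \sum_(1 <= l < k) coefLow tau dl l * #|A l|%:R).
Proof.
move=> dl A B.
have mono : forall i j, (1 <= i)%N -> (i <= j)%N -> (j <= m)%N -> tau i <= tau j.
  move=> i j hi; elim: j => [|j IH] hij hjm; first by have := leq_trans hi hij.
  rewrite leq_eqVlt in hij; case/orP: hij => [/eqP -> //|hij].
  apply: le_trans (IH hij (ltnW hjm)) _; apply/ltW/htau => //.
  exact: leq_trans hi hij.
have ge1 : forall l, (1 <= l)%N -> (l <= m)%N -> 1 <= tau l.
  by move=> l h1 h2; apply: le_trans htau1 (mono _ _ _ h1 h2).
have dge1 : 1 <= dl by apply: le_trans (ge1 _ hk1 hkm) hk.1.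
set H := coefHigh tau m dl; set C := coefA tau dl; set L := coefLow tau dl.
have key : \sum_(k <= l < m.+1) H l * (#|A l|%:R + #|B l|%:R)
   <= \sum_(1 <= l < m.+1) C l * (#|A l|%:R + #|B l|%:R) + \sum_(1 <= l < k) L l * (#|A l|%:R + #|B l|%:R).
  rewrite (big_cat_nat hk1 (leqW hkm)) /= [X in X + _]addrC -addrA -[X in X <= _]addr0 lerD //.
    apply: ler_sum_nat => i /andP [hki him].
    apply: ler_wpM2r; first by rewrite addr_ge0.
    have hi1 : (1 <= i)%N by apply: leq_trans hk1 hki.
    rewrite ltnS in him.
    have t1 := ge1 i hi1 him.
    have hdt := @dterm_le R tau _ _ him.
    rewrite /H /C /coefHigh /coefA.
    move: hdt; rewrite /dterm /tauE.
    have -> : (i == 0%N) = false by case: i hi1 {hki him t1}.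
    case: eqP => [ei hdt|/eqP hne hdt].
      rewrite ei in t1 *; rewrite -/dl in hdt *.
      have tp : 0 < tau m by lra.
      rewrite ler_pdivlMr; last lra.
      rewrite mul1r; move: hdt; rewrite ler_pdivrMr // => hdt; nra.
    have him' : (i < m)%N by rewrite ltn_neqAle hne.
    have t2 := htau i hi1 him'.
    rewrite -/dl in hdt *.
    have p1 : 0 < tau i * tau i.+1 + 1 by nra.
    rewrite ler_pdivrMr // in hdt.
    rewrite ler_pdivrMr; last lra.
    rewrite mulrAC ler_pdivlMr; last lra.
    nra.
  rewrite -big_split /= big_nat_cond; apply: sumr_ge0 => i /andP [/andP [hi1 hik] _].
  rewrite -mulrDl; apply: mulr_ge0; last by rewrite addr_ge0.
  have t1 := ge1 i hi1 (ltnW (leq_trans hik hkm)).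
  have t2 : tau i.+1 <= tau k by apply: mono.
  have t3 := ge1 i.+1 (ltnW hi1) (leq_trans hik hkm).
  rewrite /C /L /coefA /coefLow addr_ge0 // divr_ge0 //; try lra.
  - have : 1 <= dl * tau i by rewrite -[1]mulr1 ler_pM // ler01.
    lra.
  - have := hk.1; rewrite -/dl; lra.
have hsplit : forall (F : nat -> R) lo hi,
  \sum_(lo <= l < hi) F l * (#|A l|%:R + #|B l|%:R) = \sum_(lo <= l < hi) F l * #|A l|%:R + \sum_(lo <= l < hi) F l * #|B l|%:R.
  by move=> F lo hi; rewrite -big_split /=; apply: eq_bigr => i _; rewrite mulrDr.
rewrite !hsplit in key.
exact: (final _ _ _ _ _ _ key).
Qed.
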